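(* Let $\mathbb{K}$ be an algebraically closed field of characteristic zero and $N=2m\ge 2$ even. Then $\operatorname{Der}(\mathcal{H}_{N}')\cong \mathcal{H}_{N}'\rtimes \mathfrak{h}\cong \mathcal{H}_{N}$.
   Context: Let $A_N=\mathbb{K}[t_1^{\pm1},\dots,t_N^{\pm1}]$, $d_i=t_i\frac{\partial}{\partial t_i}$, and $t^{\bm r}=t_1^{r_1}\cdots t_N^{r_N}$ for $\bm r\in\mathbb{Z}^N$. Let $(\cdot,\cdot)$ be the standard bilinear form on $\mathbb{K}^N$, $(e_i,e_j)=\delta_{ij}$. For $u\in\mathbb{K}^N$, $\bm r\in\mathbb{Z}^N$ put $D(u,\bm r)=\sum_i u_i t^{\bm r}d_i$. Let $\bm J=\begin{pmatrix} O_m & I_m\\ -I_m & O_m\end{pmatrix}$, $\overline{\bm r}=\bm J\bm r$, $h_{\bm r}=D(\overline{\bm r},\bm r)$ (so $h_{\bm 0}=0$), $\mathfrak h=\operatorname{span}_{\mathbb{K}}\{d_1,\dots,d_N\}$. The Hamiltonian Lie algebra is $\mathcal{H}_N=\operatorname{span}_{\mathbb{K}}\{h_{\bm r}:\bm r\ne\bm 0\}\oplus\mathfrak h$ with commutator bracket, $[h_{\bm r},h_{\bm s}]=(\overline{\bm r},\bm s)h_{\bm r+\bm s}$, $[D(u,\bm 0),h_{\bm r}]=(u,\bm r)h_{\bm r}$; its derived subalgebra is $\mathcal{H}_N'=\operatorname{span}_{\mathbb{K}}\{h_{\bm r}:\bm r\ne\bm 0\}$, an ideal, and $\mathfrak h$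 acts on it by the adjoint action. $\operatorname{Der}$ denotes the Lie algebra of derivations. *)

(* Defs.v *)
(* with multinomials' monoid algebra {malg K[M]}
   (finitely supported functions M -> K) as the free K-vector space on M. *)
From HB Require Import structures.
From mathcomp Require Import all_boot all_order all_algebra.
From mathcomp Require Import finmap.
From mathcomp.multinomials Require Import monalg.

Set Implicit Arguments.
Unset Strict Implicit.
Unset Printing Implicit Defensive.

Import Order.TTheory GRing.Theory Num.Theory.
Local Open Scope ring_scope.

Definition lat (m : nat) := 'rV[int]_(m + m).

Definition nzlat (m : nat) := {r : lat m | r != 0}.

(* H_N' := span_K { h_r : r <> 0 }, realised as the free K-vector space
   (finitely supported functions) on the nonzero lattice vectors. *)
Definition Hder (K : fieldType) (m : nat) := {malg K[nzlat m]}.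

(* The basis element h_t, with the convention h_0 = 0. *)
Definition hb (K : fieldType) (m : nat) (t : lat m) : Hder K m :=
  match insub t with
  | Some t' => << (1 : K) *g t' >>
  | None => 0
  end.

(* (\bar r, s) = (J r, s) where J = [[0, I_m], [-I_m, 0]]:
   (J r)_i = r_{m+i} and (J r)_{m+i} = - r_i for i < m. *)
Definition Jform (m : nat) (r s : lat m) : int :=
  \sum_(i < m) (r 0 (rshift m i) * s 0 (lshift m i)
                - r 0 (lshift m i) * s 0 (rshift m i)).

Definition pairing (K : fieldType) (m : nat) (u : 'rV[K]_(m + m)) (r : lat m) : K :=
  \sum_(i < m + m) u 0 i * (r 0 i)%:~R.

Definition hbr (K : fieldType) (m : nat) (x y : Hder K m) : Hder K m :=
  \sum_(r <- msupp x) \sum_(s <- msupp y)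
     ((x@_r * y@_s * (Jform (val r) (val s))%:~R) *: hb K (val r + val s)).

(* Action of D(u, 0) in h on H_N': [D(u,0), h_r] = (u, r) h_r. *)
Definition hact (K : fieldType) (m : nat) (u : 'rV[K]_(m + m)) (x : Hder K m)
  : Hder K m :=
  \sum_(r <- msupp x) ((x@_r * pairing u (val r)) *: hb K (val r)).

(* H_N = span{h_r : r <> 0} (+) h, elements written (x, u) = x + D(u,0). *)
Definition Ham (K : fieldType) (m : nat) := (Hder K m * 'rV[K]_(m + m))%type.

Definition Ham_scale (K : fieldType) (m : nat) (a : K) (X : Ham K m) : Ham K m :=
  (a *: X.1, a *: X.2).

Definition Ham_add (K : fieldType) (m : nat) (X Y : Ham K m) : Ham K m :=
  (X.1 + Y.1, X.2 + Y.2).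

(* Commutator bracket of H_N:
   [x + D(u,0), y + D(v,0)] = [x,y] + [D(u,0), y] - [D(v,0), x]
   (the d_i commute, so the h-component is 0). *)
Definition Ham_br (K : fieldType) (m : nat) (X Y : Ham K m) : Ham K m :=
  (hbr X.1 Y.1 + hact X.2 Y.1 - hact Y.2 X.1, 0).

Definition is_derivation (K : fieldType) (m : nat) (D : Hder K m -> Hder K m) : Prop :=
  (forall (a : K) (x y : Hder K m), D (a *: x + y) = a *: D x + D y) /\
  (forall x y : Hder K m, D (hbr x y) = hbr (D x) y + hbr x (D y)).

(* Lie algebra isomorphism H_N ~= Der(H_N'), Der(H_N') carrying its
   pointwise vector space structure and the commutator bracket. *)
Definition Ham_iso_Der (K : fieldType) (m : nat)
  (Phi : Ham K m -> (Hder K m -> Hder K m)) : Prop :=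
  [/\ forall X, is_derivation (Phi X),
      forall (a : K) (X Y : Ham K m) (z : Hder K m),
        Phi (Ham_add (Ham_scale a X) Y) z = a *: Phi X z + Phi Y z,
      forall (X Y : Ham K m) (z : Hder K m),
        Phi (Ham_br X Y) z = Phi X (Phi Y z) - Phi Y (Phi X z),
      forall X Y : Ham K m, (forall z, Phi X z = Phi Y z) -> X = Y
    & forall D, is_derivation D -> exists X, forall z, Phi X z = D z].

(* Main.v *)
Require Import Defs.
From HB Require Import structures.
From mathcomp Require Import all_boot all_order all_algebra finmap.
From mathcomp.multinomials Require Import monalg.
From mathcomp Require Import ring.
Set Implicit Arguments.
Unset Strict Implicit.
Unset Printing Implicit Defensive.
Import Order.TTheory GRing.Theory Num.Theory.
Local Open Scope ring_scope.

Section Lattice.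
Variable m : nat.
Implicit Types r s t : lat m.

Lemma JformDl r1 r2 s : Jform (r1 + r2) s = Jform r1 s + Jform r2 s.
Proof. rewrite /Jform -big_split /=; apply: eq_bigr => i _; rewrite !mxE; ring. Qed.
Lemma JformDr r s1 s2 : Jform r (s1 + s2) = Jform r s1 + Jform r s2.
Proof. rewrite /Jform -big_split /=; apply: eq_bigr => i _; rewrite !mxE; ring. Qed.
Lemma JformNl r s : Jform (- r) s = - Jform r s.
Proof. rewrite /Jform -sumrN; apply: eq_bigr => i _; rewrite !mxE; ring. Qed.
Lemma JformNr r s : Jform r (- s) = - Jform r s.
Proof. rewrite /Jform -sumrN; apply: eq_bigr => i _; rewrite !mxE; ring. Qed.
Lemma JformZl (z : int) r s : Jform (z *: r) s = z * Jform r s.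
Proof. rewrite /Jform mulr_sumr; apply: eq_bigr => i _; rewrite !mxE; ring. Qed.
Lemma JformZr (z : int) r s : Jform r (z *: s) = z * Jform r s.
Proof. rewrite /Jform mulr_sumr; apply: eq_bigr => i _; rewrite !mxE; ring. Qed.
Lemma Jform_anti r s : Jform s r = - Jform r s.
Proof. rewrite /Jform -sumrN; apply: eq_bigr => i _; ring. Qed.
Lemma Jform_self r : Jform r r = 0.
Proof. by rewrite /Jform big1 // => i _; ring. Qed.
Lemma Jform0l s : Jform 0 s = 0.
Proof. by rewrite /Jform big1 // => i _; rewrite !mxE; ring. Qed.
Lemma Jform0r r : Jform r 0 = 0.
Proof. by rewrite /Jform big1 // => i _; rewrite !mxE; ring. Qed.
Lemma JformBl r1 r2 s : Jform (r1 - r2) s = Jform r1 s - Jform r2 s.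
Proof. by rewrite JformDl JformNl. Qed.
Lemma JformBr r s1 s2 : Jform r (s1 - s2) = Jform r s1 - Jform r s2.
Proof. by rewrite JformDr JformNr. Qed.

Definition ev (j : 'I_(m + m)) : lat m := 'e_j.

Lemma Jform_evl r (i : 'I_m) : Jform r (ev (lshift m i)) = r 0 (rshift m i).
Proof.
rewrite /Jform (bigD1 i) //= big1 => [|k ki].
  by rewrite !mxE !eqxx eq_rlshift /=; ring.
by rewrite !mxE eq_rlshift eq_lshift (negbTE ki) /=; ring.
Qed.
Lemma Jform_evr r (i : 'I_m) : Jform r (ev (rshift m i)) = - r 0 (lshift m i).
Proof.
rewrite /Jform (bigD1 i) //= big1 => [|k ki].
  by rewrite !mxE !eqxx eq_lrshift /=; ring.
by rewrite !mxE eq_lrshift eq_rshift (negbTE ki) /=; ring.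
Qed.

Lemma Jform_sum r s : Jform r s = \sum_(j < m + m) s 0 j * Jform r (ev j).
Proof.
rewrite {1}(row_sum_delta s).
elim/big_rec2: _ => [|j y x _ IH]; first by rewrite Jform0r.
by rewrite JformDr JformZr IH.
Qed.

Lemma exists_ev r : r != 0 -> exists j, Jform r (ev j) != 0.
Proof.
move=> rn0.
have [j rj] : exists j, r 0 j != 0.
  apply/existsP; apply: contraNT rn0 => /existsPn H; apply/eqP/rowP => j.
  by rewrite mxE; apply/eqP; move: (H j); rewrite negbK.
case: (split_ordP j) => k jk; rewrite jk in rj.
  by exists (rshift m k); rewrite Jform_evr oppr_eq0.
by exists (lshift m k); rewrite Jform_evl.
Qed.

Lemma poly_nonroot (p : {poly int}) : p != 0 -> exists k : int, p.[k] != 0.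
Proof.
move=> pn0.
have [|] := boolP (has (fun k : nat => p.[k%:Z] != 0) (iota 0 (size p))).
  by move=> /hasP [k _ H]; exists k%:Z.
move=> /hasPn H; exfalso.
suff: (size (map (fun k : nat => k%:Z) (iota 0 (size p))) < size p)%N.
  by rewrite size_map size_iota ltnn.
apply: max_poly_roots => //.
  by apply/allP => z /mapP [k kin ->]; rewrite /root; move: (H k kin); rewrite negbK.
by rewrite map_inj_uniq ?iota_uniq // => a b [].
Qed.

Lemma lemmaG (vs : seq (lat m)) : all (fun v => v != 0) vs ->
  exists w : lat m, all (fun v => Jform v w != 0) vs.
Proof.
move=> Hvs.
pose c (v : lat m) (j : nat) : int :=
  if insub j is Some j' then Jform v (ev j') else 0.
have cE v (j : 'I_(m+m)) : c v j = Jform v (ev j) by rewrite /c valK.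
pose P (v : lat m) : {poly int} := \poly_(j < m + m) c v j.
have Pn0 v : v != 0 -> P v != 0.
  move=> /exists_ev [j Hj]; apply/eqP => E0.
  have := congr1 (fun q : {poly int} => q`_j) E0.
  rewrite /= coef_poly ltn_ord cE coef0 => E; by rewrite E eqxx in Hj.
have [k Hk] : exists k : int, (\prod_(v <- vs) P v).[k] != 0.
  apply: poly_nonroot; rewrite prodf_seq_neq0; apply/allP => v vin /=; apply: Pn0.
  by move/allP: Hvs; apply.
exists (\row_j k ^+ j).
move: Hk; rewrite horner_prod prodf_seq_neq0 => /allP H.
apply/allP => v vin; move: (H v vin) => /=.
rewrite horner_poly Jform_sum.
rewrite (eq_bigr (fun i : 'I_(m+m) => (\row_j k ^+ j) 0 i * Jform v (ev i))) //.
by move=> i _; rewrite mxE cE mulrC.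
Qed.

End Lattice.

Section Alg.
Variable K : fieldType.
Variable m : nat.
Local Notation H := (Hder K m).
Local Notation w r s := ((Jform r s)%:~R : K).

Definition islin (V : lmodType K) (f : H -> V) :=
  forall (a : K) (x y : H), f (a *: x + y) = a *: f x + f y.

Section LinFacts.
Variables (V : lmodType K) (f : H -> V) (fL : islin f).
Lemma lin0 : f 0 = 0.
Proof. have E := fL 1 0 0; rewrite !scale1r !addr0 in E; by apply: (addrI (f 0)); rewrite addr0 -E. Qed.
Lemma linD x y : f (x + y) = f x + f y.
Proof. by have := fL 1 x y; rewrite !scale1r. Qed.
Lemma linZ a x : f (a *: x) = a *: f x.
Proof. by rewrite -(addr0 (a *: x)) fL lin0 addr0. Qed.
Lemma linN x : f (- x) = - f x.
Proof. by have := linZ (-1) x; rewrite !scaleN1r. Qed.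
Lemma linB x y : f (x - y) = f x - f y.
Proof. by rewrite linD linN. Qed.
Lemma lin_sum (I : Type) (s : seq I) (F : I -> H) :
  f (\sum_(i <- s) F i) = \sum_(i <- s) f (F i).
Proof.
elim: s => [|i s IH]; first by rewrite !big_nil lin0.
by rewrite !big_cons linD IH.
Qed.
End LinFacts.

Lemma hb_val (k : nzlat m) : hb K (val k) = << k >>.
Proof. by rewrite /hb valK. Qed.
Lemma hb0 : hb K (0 : lat m) = 0.
Proof. by rewrite /hb insubN // negbK. Qed.

Lemma mcoeffU_H (c : K) (k k' : nzlat m) : (<< c *g k >> : H)@_k' = c *+ (k == k').
Proof. exact: mcoeffU. Qed.
Lemma mcoeffZ_H (c : K) (g : H) k : (c *: g)@_k = c * g@_k.
Proof. exact: mcoeffZ. Qed.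
Lemma mcoeffD_H (g g' : H) k : (g + g')@_k = g@_k + g'@_k.
Proof. exact: mcoeffD. Qed.

Lemma monalgZ (c : K) (k : nzlat m) : c *: (<< k >> : H) = << c *g k >>.
Proof.
apply/malgP => k'; rewrite mcoeffZ_H [in RHS]mcoeffU_H [X in c * X]mcoeffU_H.
by rewrite mulr_natr.
Qed.

Lemma decomp (x : H) : x = \sum_(k <- msupp x) x@_k *: hb K (val k).
Proof.
rewrite {1}(monalgE x); apply: eq_bigr => k _.
by rewrite hb_val monalgZ.
Qed.

Lemma lin_ext (V : lmodType K) (f g : H -> V) : islin f -> islin g ->
  (forall k : nzlat m, f (hb K (val k)) = g (hb K (val k))) -> forall x, f x = g x.
Proof.
move=> fL gL E x; rewrite (decomp x) (lin_sum fL) (lin_sum gL).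
by apply: eq_bigr => k _; rewrite (linZ fL) (linZ gL) E.
Qed.

Lemma lin_ext_all (V : lmodType K) (f g : H -> V) : islin f -> islin g ->
  (forall r : lat m, f (hb K r) = g (hb K r)) -> forall x, f x = g x.
Proof. by move=> fL gL E; apply: lin_ext. Qed.

Definition L (V : lmodType K) (G : nzlat m -> V) (x : H) : V :=
  \sum_(k <- msupp x) x@_k *: G k.

Lemma L_sup (V : lmodType K) (G : nzlat m -> V) (x : H) (S : {fset nzlat m}) :
  (msupp x `<=` S)%fset -> L G x = \sum_(k <- S) x@_k *: G k.
Proof.
move=> sub; rewrite /L (big_fset_incl _ sub) // => k _ kn.
by rewrite mcoeff_outdom // scale0r.
Qed.

Lemma L_lin (V : lmodType K) (G : nzlat m -> V) : islin (L G).
Proof.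
move=> a x y.
set S := (msupp x `|` msupp y `|` msupp (a *: x + y))%fset.
have sx : (msupp x `<=` S)%fset by rewrite /S -fsetUA fsubsetUl.
have sy : (msupp y `<=` S)%fset.
  by rewrite /S -fsetUA fsetUA (fsetUC (msupp x)) -fsetUA fsubsetUl.
have sz : (msupp (a *: x + y) `<=` S)%fset by rewrite /S fsubsetUr.
rewrite (L_sup _ sx) (L_sup _ sy) (L_sup _ sz) scaler_sumr -big_split /=.
by apply: eq_bigr => k _; rewrite mcoeffD mcoeffZ scalerDl scalerA.
Qed.

Lemma L_hb (V : lmodType K) (G : nzlat m -> V) (k : nzlat m) : L G (hb K (val k)) = G k.
Proof.
rewrite hb_val /L msuppU oner_eq0 big_seq_fset1 mcoeffUU scale1r //.
Qed.

Lemma L_sumr (V : lmodType K) (I : Type) (s : seq I) (G : I -> nzlat m -> V) x :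
  L (fun k => \sum_(i <- s) G i k) x = \sum_(i <- s) L (G i) x.
Proof.
rewrite /L exchange_big /=; apply: eq_bigr => k _; by rewrite scaler_sumr.
Qed.

Lemma L_lin2 (F : nzlat m -> H -> H) x : (forall k, islin (F k)) ->
  islin (fun y => L (fun k => F k y) x).
Proof.
move=> FL a y z; rewrite /L scaler_sumr -big_split /=; apply: eq_bigr => k _.
by rewrite FL scalerDr !scalerA mulrC.
Qed.

Definition Bk (r : nzlat m) (y : H) : H := L (fun s => w (val r) (val s) *: hb K (val r + val s)) y.

Lemma hbrE (x y : H) : hbr x y = L (fun r => Bk r y) x.
Proof.
rewrite /hbr /L /Bk; apply: eq_bigr => r _; rewrite /L scaler_sumr.
by apply: eq_bigr => s _; rewrite !scalerA.
Qed.

Lemma hactE (u : 'rV[K]_(m + m)) (x : H) :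
  hact u x = L (fun r => pairing u (val r) *: hb K (val r)) x.
Proof. by rewrite /hact /L; apply: eq_bigr => r _; rewrite scalerA. Qed.

Lemma hbr_linl y : islin (fun x => hbr x y).
Proof. by move=> a x z; rewrite !hbrE L_lin. Qed.
Lemma hbr_linr x : islin (fun y => hbr x y).
Proof. by move=> a y z; rewrite !hbrE; apply: L_lin2 => k; exact: L_lin. Qed.
Lemma hact_lin u : islin (hact u).
Proof. by move=> a y z; rewrite !hactE L_lin. Qed.

Lemma L0 (V : lmodType K) (G : nzlat m -> V) : L G 0 = 0.
Proof. exact: (lin0 (L_lin G)). Qed.

Lemma nz_case (r : lat m) (P : lat m -> Prop) :
  P 0 -> (forall k : nzlat m, P (val k)) -> P r.
Proof.
move=> P0 Pk; have [->|rn0] := eqVneq r 0; first by [].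
exact: (Pk (exist _ r rn0)).
Qed.

Lemma hbr_hb (r s : lat m) : hbr (hb K r) (hb K s) = w r s *: hb K (r + s).
Proof.
elim/nz_case: r => [|kr]; first by rewrite hb0 hbrE L0 Jform0l scale0r.
elim/nz_case: s => [|ks]; first by rewrite hb0 hbrE /Bk L_hb L0 Jform0r scale0r.
by rewrite hbrE L_hb /Bk L_hb.
Qed.

Lemma hact_hb u (r : lat m) : hact u (hb K r) = pairing u r *: hb K r.
Proof.
elim/nz_case: r => [|kr]; first by rewrite hb0 hactE L0 scaler0.
by rewrite hactE L_hb.
Qed.

End Alg.

Section Ident.
Variable K : fieldType.
Variable m : nat.
Local Notation H := (Hder K m).
Local Notation w r s := ((Jform r s)%:~R : K).

Lemma islin_comp (f g : H -> H) : islin f -> islin g -> islin (fun z => f (g z)).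
Proof. by move=> fL gL a x y; rewrite gL fL. Qed.
Lemma islin_add (f g : H -> H) : islin f -> islin g -> islin (fun z => f z + g z).
Proof. by move=> fL gL a x y; rewrite fL gL scalerDr addrACA. Qed.
Lemma islin_sub (f g : H -> H) : islin f -> islin g -> islin (fun z => f z - g z).
Proof. by move=> fL gL a x y; rewrite fL gL scalerBr addrACA opprD. Qed.
Lemma islin_id : islin (fun z : H => z).
Proof. by []. Qed.

Let hlr y := hbr_linl (K:=K) (m:=m) y.
Let hrr x := hbr_linr (K:=K) (m:=m) x.

Lemma hbrZl a (x y : H) : hbr (a *: x) y = a *: hbr x y.
Proof. exact: (linZ (hlr y)). Qed.
Lemma hbrZr a (x y : H) : hbr x (a *: y) = a *: hbr x y.
Proof. exact: (linZ (hrr x)). Qed.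
Lemma hbrDl (x x' y : H) : hbr (x + x') y = hbr x y + hbr x' y.
Proof. exact: (linD (hlr y)). Qed.
Lemma hbrDr (x y y' : H) : hbr x (y + y') = hbr x y + hbr x y'.
Proof. exact: (linD (hrr x)). Qed.
Lemma hbrBl (x x' y : H) : hbr (x - x') y = hbr x y - hbr x' y.
Proof. exact: (linB (hlr y)). Qed.
Lemma hbrBr (x y y' : H) : hbr x (y - y') = hbr x y - hbr x y'.
Proof. exact: (linB (hrr x)). Qed.
Lemma hactZ (u : 'rV[K]_(m+m)) a (x : H) : hact u (a *: x) = a *: hact u x.
Proof. exact: (linZ (hact_lin u)). Qed.
Lemma hactD (u : 'rV[K]_(m+m)) (x y : H) : hact u (x + y) = hact u x + hact u y.
Proof. exact: (linD (hact_lin u)). Qed.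
Lemma hactB (u : 'rV[K]_(m+m)) (x y : H) : hact u (x - y) = hact u x - hact u y.
Proof. exact: (linB (hact_lin u)). Qed.

Lemma jacobi (x y z : H) : hbr x (hbr y z) = hbr (hbr x y) z + hbr y (hbr x z).
Proof.
move: z; apply: lin_ext_all.
- exact: islin_comp.
- apply: islin_add; [exact: hbr_linr | exact: islin_comp].
move=> t; move: y; apply: lin_ext_all.
- exact: (islin_comp (hrr x) (hlr _)).
- apply: islin_add; [exact: (islin_comp (hlr _) (hrr _)) | exact: hlr].
move=> s; move: x; apply: lin_ext_all.
- exact: hlr.
- apply: islin_add; [exact: (islin_comp (hlr _) (hlr _)) | exact: (islin_comp (hrr _) (hlr _))].
move=> r.
rewrite !hbr_hb hbrZl !hbrZr !hbr_hb.
rewrite !scalerA (addrCA s r t).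
have -> : r + (s + t) = r + s + t by rewrite addrA.
rewrite -scalerDl.
suff -> : w s t * w r (s + t) = w r s * w (r + s) t + w r t * w s (r + t) by [].
rewrite -!intrM -intrD; congr intr.
rewrite !JformDl !JformDr (Jform_anti r s); ring.
Qed.

Lemma pairingD (u : 'rV[K]_(m+m)) (r s : lat m) : pairing u (r + s) = pairing u r + pairing u s.
Proof. by rewrite /pairing -big_split /=; apply: eq_bigr => i _; rewrite mxE intrD mulrDr. Qed.
Lemma pairing0 (u : 'rV[K]_(m+m)) : pairing u (0 : lat m) = 0.
Proof. by rewrite /pairing big1 // => i _; rewrite mxE mulr0. Qed.
Lemma pairing_lin (a : K) (u v : 'rV[K]_(m+m)) (r : lat m) : pairing (a *: u + v) r = a * pairing u r + pairing v r.
Proof.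
rewrite /pairing mulr_sumr -big_split /=; apply: eq_bigr => i _.
by rewrite !mxE mulrDl mulrA.
Qed.
Lemma pairing_u0 (r : lat m) : pairing (0 : 'rV[K]_(m+m)) r = 0.
Proof. by rewrite /pairing big1 // => i _; rewrite mxE mul0r. Qed.

Lemma hact_der (u : 'rV[K]_(m+m)) (y z : H) : hact u (hbr y z) = hbr (hact u y) z + hbr y (hact u z).
Proof.
move: z; apply: lin_ext_all.
- exact: (islin_comp (hact_lin _) (hrr _)).
- apply: islin_add; [exact: hrr | exact: (islin_comp (hrr _) (hact_lin _))].
move=> t; move: y; apply: lin_ext_all.
- exact: (islin_comp (hact_lin _) (hlr _)).
- apply: islin_add; [exact: (islin_comp (hlr _) (hact_lin _)) | exact: hlr].
move=> s.
rewrite hbr_hb hactZ !hact_hb hbrZl hbrZr !hbr_hb.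
rewrite !scalerA -scalerDl pairingD.
suff -> : w s t * (pairing u s + pairing u t) = pairing u s * w s t + pairing u t * w s t by [].
ring.
Qed.

Lemma hact_comm (u v : 'rV[K]_(m+m)) (z : H) : hact u (hact v z) = hact v (hact u z).
Proof.
move: z; apply: lin_ext_all.
- exact: (islin_comp (hact_lin _) (hact_lin _)).
- exact: (islin_comp (hact_lin _) (hact_lin _)).
move=> s; rewrite !hact_hb !hactZ !hact_hb !scalerA.
by rewrite [pairing v s * _]mulrC.
Qed.

Lemma hact_linu (a : K) (u v : 'rV[K]_(m+m)) (z : H) : hact (a *: u + v) z = a *: hact u z + hact v z.
Proof.
move: z; apply: lin_ext_all.
- exact: hact_lin.
- apply: islin_add; last exact: hact_lin.
  by move=> b x y; rewrite hactD hactZ scalerDr !scalerA mulrC.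
move=> s; by rewrite !hact_hb pairing_lin scalerDl scalerA.
Qed.

Lemma hact0 (z : H) : hact 0 z = 0.
Proof.
by rewrite hactE /L big1 // => k _; rewrite pairing_u0 scale0r scaler0.
Qed.

Lemma hbr_anti (x y : H) : hbr x y = - hbr y x.
Proof.
move: y; apply: lin_ext_all; first exact: hrr.
  by move=> a y z; rewrite hbrDl hbrZl scalerN opprD.
move=> t; move: x; apply: lin_ext_all; first exact: hlr.
  by move=> a y z; rewrite hbrDr hbrZr scalerN opprD.
move=> r; rewrite !hbr_hb -scaleNr (addrC t r) (Jform_anti r t).
by rewrite intrN opprK.
Qed.

End Ident.

Section Coef.
Variable K : fieldType.
Variable m : nat.
Local Notation H := (Hder K m).
Local Notation w r s := ((Jform r s)%:~R : K).

Definition co (x : H) (t : lat m) : K :=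
  if insub t is Some t' then x@_t' else 0.

Lemma co_val x (k : nzlat m) : co x (val k) = x@_k.
Proof. by rewrite /co valK. Qed.
Lemma co_0 x : co x 0 = 0.
Proof. by rewrite /co insubN // negbK. Qed.
Lemma co_ext (x y : H) : (forall t, co x t = co y t) -> x = y.
Proof. by move=> E; apply/malgP => k; rewrite -!co_val. Qed.

Lemma mcoeff0_H (k : nzlat m) : (0 : H)@_k = 0.
Proof. exact: mcoeff0. Qed.

Lemma co_lin a (x y : H) t : co (a *: x + y) t = a * co x t + co y t.
Proof.
elim/nz_case: t => [|k]; first by rewrite !co_0 mulr0 addr0.
by rewrite !co_val mcoeffD_H mcoeffZ_H.
Qed.
Lemma coD (x y : H) t : co (x + y) t = co x t + co y t.
Proof. by have := co_lin 1 x y t; rewrite scale1r mul1r. Qed.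
Lemma coZ a (x : H) t : co (a *: x) t = a * co x t.
Proof. by have := co_lin a x 0 t; rewrite addr0 => ->; rewrite /co; case: insub => [k|]; rewrite ?mcoeff0_H addr0. Qed.
Lemma co_zero t : co (0 : H) t = 0.
Proof. by have := coZ 0 0 t; rewrite scale0r mul0r. Qed.
Lemma coN (x : H) t : co (- x) t = - co x t.
Proof. by rewrite -scaleN1r coZ mulN1r. Qed.
Lemma coB (x y : H) t : co (x - y) t = co x t - co y t.
Proof. by rewrite coD coN. Qed.
Lemma co_sum (I : Type) (s : seq I) (F : I -> H) t :
  co (\sum_(i <- s) F i) t = \sum_(i <- s) co (F i) t.
Proof.
elim: s => [|i s IH]; first by rewrite !big_nil co_zero.
by rewrite !big_cons coD IH.
Qed.

Lemma co_hb r t : co (hb K r) t = ((r == t) && (t != 0))%:R.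
Proof.
elim/nz_case: r => [|k]; first by rewrite hb0 co_zero eq_sym andbN.
elim/nz_case: t => [|k']; first by rewrite co_0 eqxx andbF.
rewrite co_val hb_val mcoeffU_H (valP k') andbT.
by [].
Qed.

Lemma sum_ind (R : ringType) (I : eqType) (s : seq I) (k0 : I) (G : I -> R) :
  uniq s -> \sum_(k <- s) (k == k0)%:R * G k = if k0 \in s then G k0 else 0.
Proof.
move=> us; case: ifPn => kin.
  rewrite (bigD1_seq k0) //= eqxx mul1r big1_seq ?addr0 // => k /andP [kk0 _].
  by rewrite (negbTE kk0) mul0r.
rewrite big1_seq // => k ks; have : k != k0 by apply: contraNneq kin => <-.
by move/negbTE ->; rewrite mul0r.
Qed.

Lemma sum_pick (x : H) (F : lat m -> K) (q : lat m) :
  \sum_(k <- msupp x) x@_k * ((val k == q)%:R * F (val k)) = co x q * F q.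
Proof.
elim/nz_case: q => [|k0].
  rewrite co_0 mul0r big1 // => k _.
  by rewrite (negbTE (valP k)) mul0r mulr0.
rewrite co_val.
rewrite (eq_bigr (fun k => (k == k0)%:R * (x@_k * F (val k)))); last first.
  by move=> k _; rewrite val_eqE mulrCA.
rewrite sum_ind ?fset_uniq //; case: ifPn => // kn.
by rewrite mcoeff_outdom // mul0r.
Qed.

Lemma co_hbr_hb (x : H) (s t : lat m) : co (hbr x (hb K s)) t = co x (t - s) * w (t - s) s.
Proof.
elim/nz_case: t => [|kt].
  by rewrite co_0 sub0r JformNl Jform_self oppr0 mulr0.
rewrite {1}(decomp x) (lin_sum (hbr_linl _)) co_sum.
rewrite (eq_bigr (fun k => x@_k * (((val k == val kt - s))%:R * w (val k) s))); last first.
  move=> k _; rewrite hbrZl hbr_hb !coZ co_hb (valP kt) andbT.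
  have -> : (val k == val kt - s) = (val k + s == val kt).
    by rewrite eq_sym subr_eq eq_sym.
  by rewrite (mulrC (w (val k) s)).
exact: (sum_pick x (fun q => w q s)).
Qed.

Lemma co_hbr_hbl (y : H) (r t : lat m) : co (hbr (hb K r) y) t = w r (t - r) * co y (t - r).
Proof.
by rewrite hbr_anti coN co_hbr_hb (Jform_anti r) intrN mulrN opprK mulrC.
Qed.

Lemma co_hact_hb u (s t : lat m) : co (hact u (hb K s)) t = pairing u s * co (hb K s) t.
Proof. by rewrite hact_hb coZ. Qed.

End Coef.

Section FunEq.
Variable K : fieldType.
Variable m : nat.
Hypothesis charK0 : [pchar K] =i pred0.
Local Notation w r s := ((Jform r s)%:~R : K).

Lemma intr_neq0 (z : int) : z != 0 -> (z%:~R : K) != 0.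
Proof.
have H0 n : (n%:R == 0 :> K) = (n == 0)%N by move: n; apply/(pcharf0P K).
case: z => n nz.
  by rewrite -[(Posz n)%:~R]/(n%:R : K) H0; apply: contra nz => /eqP ->.
by rewrite -[(Negz n)%:~R]/(- (n.+1)%:R : K) oppr_eq0 H0.
Qed.

Lemma w_neq0 (r s : lat m) : Jform r s != 0 -> w r s != 0.
Proof. exact: intr_neq0. Qed.

Lemma wDl (r1 r2 s : lat m) : w (r1 + r2) s = w r1 s + w r2 s.
Proof. by rewrite JformDl intrD. Qed.
Lemma wDr (r s1 s2 : lat m) : w r (s1 + s2) = w r s1 + w r s2.
Proof. by rewrite JformDr intrD. Qed.

Definition sol (a : lat m) (h : lat m -> K) :=
  forall r s, w r s * h (r + s) = h r * w (r + a) s + w r (s + a) * h s.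

Section Sol.
Variables (a : lat m) (h : lat m -> K).
Hypothesis hs : sol a h.
Hypothesis hma : h (- a) = 0.

Lemma solK (r s : lat m) : h s = 0 -> Jform a s != 0 -> Jform r s = 0 -> h r = 0.
Proof.
move=> hs0 As rs0; have := hs r s.
rewrite hs0 mulr0 addr0 rs0 mul0r wDl rs0 add0r => /esym /eqP.
by rewrite mulf_eq0 (negbTE (w_neq0 As)) orbF => /eqP.
Qed.

Lemma solP (s : lat m) : Jform a s != 0 -> h (s - a) = h s.
Proof.
move=> As; have := hs (- a) s.
rewrite hma mul0r add0r !JformNl JformDr Jform_self addr0 intrN (addrC (-a) s).
rewrite !mulNr => /eqP; rewrite eqr_opp => /eqP.
by apply: mulfI; apply: w_neq0.
Qed.

Lemma solPZ (s : lat m) (z : int) : Jform a s != 0 -> h (s + z *: a) = h s.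
Proof.
move=> As; elim/int_rect: z => [|n IH|n IH]; first by rewrite scale0r addr0.
  rewrite intS scalerDl scale1r (addrC a) addrA -IH.
  have E : h (s + n%:Z *: a + a - a) = h (s + n%:Z *: a + a).
    by apply: solP; rewrite !JformDr JformZr Jform_self mulr0 !addr0.
  by rewrite addrK in E.
rewrite intS opprD scalerDl scaleN1r (addrC (-a)) addrA solP //.
by rewrite JformDr JformZr Jform_self mulr0 addr0.
Qed.

End Sol.

Lemma w_anti (r s : lat m) : w s r = - w r s.
Proof. by rewrite Jform_anti intrN. Qed.

Lemma solA (a : lat m) : sol a (fun s => w a s).
Proof.
move=> r s; rewrite -!intrM -!intrD; congr intr.
rewrite !JformDl !JformDr (Jform_anti a r); ring.
Qed.

Lemma sol_comb (a : lat m) (g : lat m -> K) (B C : K) :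
  sol a g -> sol a (fun s => g s * B - C * w a s).
Proof.
move=> gs r s /=.
have E1 := gs r s; have E2 := solA a r s.
transitivity (B * (w r s * g (r + s)) - C * (w r s * w a (r + s))); first by ring.
by rewrite E1 E2; ring.
Qed.

Lemma L1 (a : lat m) (g : lat m -> K) (b : lat m) :
  a != 0 -> Jform a b != 0 -> g 0 = 0 -> g (- a) = 0 -> sol a g ->
  forall s, g s * w a b = g b * w a s.
Proof.
move=> an0 Ab g0 gma gs.
pose h s := g s * w a b - g b * w a s.
have hs : sol a h by exact: sol_comb.
have hma : h (- a) = 0 by rewrite /h gma mul0r JformNr Jform_self oppr0 mulr0 subrr.
have hb : h b = 0 by rewrite /h mulrC subrr.
suff H : forall t, h t = 0.
  by move=> s; apply/eqP; rewrite -subr_eq0; apply/eqP; exact: H.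
move=> t.
have Hnz y : Jform a y != 0 -> h y = 0.
  move=> At.
  pose j := Jform y b.
  pose s := Jform a b *: y - j *: a.
  have sb : Jform s b = 0.
    by rewrite /s JformBl !JformZl /j mulrC subrr.
  have As : Jform a s != 0.
    by rewrite /s JformBr !JformZr Jform_self mulr0 subr0 mulf_neq0.
  have hs0 : h s = 0 by apply: (solK hs hb Ab sb).
  have hbt : h (Jform a b *: y) = 0.
    by rewrite -(subrK (j *: a) (Jform a b *: y)) -/s (solPZ hs hma) //.
  apply: (solK hs hbt).
    by rewrite JformZr mulf_neq0.
  by rewrite JformZr Jform_self mulr0.
have [At|At] := eqVneq (Jform a t) 0; last exact: Hnz.
have [->|tna] := eqVneq t (- a); first exact: hma.
have ta0 : t + a != 0 by rewrite addr_eq0.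
have [r] : exists r : lat m, all (fun v => Jform v r != 0) [:: a; t + a].
  by apply: lemmaG; rewrite /= an0 ta0.
rewrite /= andbT => /andP [Ar tar].
have hr : h r = 0 by exact: Hnz Ar.
have hrt : h (r + t) = 0 by apply: Hnz; rewrite JformDr At addr0.
have := hs r t; rewrite hrt hr mulr0 mul0r add0r => /esym/eqP.
rewrite mulf_eq0 => /orP [|/eqP //].
by rewrite (negbTE (w_neq0 _)) // (Jform_anti (t + a) r) oppr_eq0.
Qed.

End FunEq.

Section FunEq0.
Variable K : fieldType.
Variable m : nat.
Hypothesis charK0 : [pchar K] =i pred0.
Local Notation w r s := ((Jform r s)%:~R : K).

Lemma L2 (g : lat m -> K) : g 0 = 0 ->
  (forall r s, w r s * g (r + s) = g r * w r s + w r s * g s) ->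
  forall s, g s = pairing (\row_j g (ev j)) s.
Proof.
move=> g0 E.
have gadd' r s : Jform r s != 0 -> g (r + s) = g r + g s.
  move=> rs; apply: (mulfI (w_neq0 charK0 rs)); rewrite E; ring.
have gN r : g (- r) = - g r.
  have [->|rn0] := eqVneq r 0; first by rewrite oppr0 g0 oppr0.
  have [v] : exists v : lat m, all (fun x => Jform x v != 0) [:: r].
    by apply: lemmaG; rewrite /= rn0.
  rewrite /= andbT => rv.
  have E1 : g v = g r + g (v - r).
    have := gadd' r (v - r); rewrite (addrC r (v - r)) subrK; apply.
    by rewrite JformBr Jform_self subr0.
  have E2 : g (v - r) = g (- r) + g v.
    have := gadd' (- r) v; rewrite (addrC (- r) v); apply.
    by rewrite JformNl oppr_eq0.
  rewrite E2 in E1.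
  apply/eqP; rewrite -addr_eq0; apply/eqP.
  have -> : g (- r) + g r = (g r + (g (- r) + g v)) - g v by ring.
  by rewrite -E1 subrr.
have gadd r s : g (r + s) = g r + g s.
  have [->|rn0] := eqVneq r 0; first by rewrite g0 !add0r.
  have [->|sn0] := eqVneq s 0; first by rewrite g0 !addr0.
  have [rs0|rsn0] := eqVneq (r + s) 0.
    rewrite rs0 g0; move/eqP: rs0; rewrite addr_eq0 => /eqP ->.
    by rewrite gN addNr.
  have [v0] : exists v : lat m, all (fun x => Jform x v != 0) [:: r; s; r + s].
    by apply: lemmaG; rewrite /= rn0 sn0 rsn0.
  rewrite /= andbT => /and3P [rv sv rsv].
  have [v [rv' sv' rsv' rsv2]] : exists v : lat m, [/\ Jform r v != 0, Jform s v != 0,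
      Jform (r + s) v != 0 & Jform r (s + v) != 0].
    have [H1|H1] := eqVneq (Jform r (s + v0)) 0; last by exists v0; split.
    exists (2%:Z *: v0); split; rewrite ?JformZr ?mulf_neq0 //.
    rewrite JformDr JformZr; move: H1; rewrite JformDr => /eqP; rewrite addr_eq0 => /eqP ->.
    have -> : - Jform r v0 + 2%:Z * Jform r v0 = Jform r v0 by ring.
    by [].
  have F1 : g (r + s + v) = g (r + s) + g v by exact: gadd'.
  have F2 : g (r + s + v) = g r + g (s + v) by rewrite -addrA; exact: gadd'.
  have F3 : g (s + v) = g s + g v by exact: gadd'.
  by apply: (addIr (g v)); rewrite -F1 F2 F3 addrA.
have one : ((1 : int)%:~R : K) = 1 by [].
have gZ (z : int) v : g (z *: v) = z%:~R * g v.
  elim/int_rect: z => [|n IH|n IH]; first by rewrite scale0r g0 mul0r.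
    by rewrite intS scalerDl scale1r gadd IH intrD mulrDl one mul1r.
  by rewrite intS opprD scalerDl scaleN1r gadd gN IH intrD !intrN one mulrDl mulN1r.
move=> s; rewrite {1}(row_sum_delta s) /pairing.
elim/big_rec2: _ => [|j y x _ IH]; first by rewrite g0.
by rewrite gadd gZ IH mxE mulrC.
Qed.

End FunEq0.

Lemma zmod_id7 (V : zmodType) (A B C D E F G : V) :
  A + D - G + 0 = (A + B + C) + (D + E + F) - (B + E + (G + C + F)).
Proof.
have e1 : (A + B + C) + (D + E + F) = (A + D + (C + F)) + (B + E).
  by rewrite addrACA (addrACA A B D E) addrAC.
have e2 : B + E + (G + C + F) = (B + E) + (G + (C + F)) by rewrite (addrA G C F).
rewrite e1 e2 addrKA (addrC G (C + F)) addrKA addr0.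
by [].
Qed.

Section Main.
Local Opaque hbr hact.
Variable K : fieldType.
Variable m : nat.
Hypothesis charK0 : [pchar K] =i pred0.
Local Notation H := (Hder K m).
Local Notation w r s := ((Jform r s)%:~R : K).

Definition Phi0 (X : Ham K m) (z : H) : H := hbr X.1 z + hact X.2 z.

Lemma Phi0_lin X : islin (Phi0 X).
Proof.
move=> a y z; rewrite /Phi0 hbrDr hbrZr hactD hactZ scalerDr addrACA.
by [].
Qed.

Lemma Phi0_der X : is_derivation (Phi0 X).
Proof.
split; first exact: Phi0_lin.
move=> y z; rewrite /Phi0 jacobi hact_der hbrDl hbrDr; exact: addrACA.
Qed.

Lemma Phi0_linX a X Y z : Phi0 (Ham_add (Ham_scale a X) Y) z = a *: Phi0 X z + Phi0 Y z.
Proof.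
rewrite /Phi0 /Ham_add /Ham_scale /= hbrDl hbrZl hact_linu scalerDr; exact: addrACA.
Qed.

Lemma Phi0_br X Y z : Phi0 (Ham_br X Y) z = Phi0 X (Phi0 Y z) - Phi0 Y (Phi0 X z).
Proof.
case: X => x u; case: Y => y v; rewrite /Phi0 /Ham_br /=.
have hbrNl (p q : H) : hbr (- p) q = - hbr p q by exact: (linN (hbr_linl q)).
rewrite hact0 !hbrDl hbrNl !hbrDr !hactD (jacobi x y z) (hact_der u y z) (hact_der v x z).
rewrite (hact_comm u v z).
exact: zmod_id7.
Qed.

Lemma co_Phi0 (X : Ham K m) (s t : lat m) :
  co (Phi0 X (hb K s)) t = co X.1 (t - s) * w (t - s) s + pairing X.2 s * co (hb K s) t.
Proof. by rewrite /Phi0 coD co_hbr_hb co_hact_hb. Qed.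

Lemma co_Phi0p (x : H) u (s t : lat m) :
  co (Phi0 (x, u) (hb K s)) t = co x (t - s) * w (t - s) s + pairing u s * co (hb K s) t.
Proof. exact: co_Phi0. Qed.

Lemma ev_neq0 (j : 'I_(m + m)) : ev j != 0.
Proof. by apply/eqP => /rowP /(_ j); rewrite !mxE !eqxx. Qed.

Lemma pairing_ev (u : 'rV[K]_(m + m)) j : pairing u (ev j) = u 0 j.
Proof.
rewrite /pairing (bigD1 j) //= big1 => [|i ij].
  by rewrite !mxE !eqxx mulr1 addr0.
by rewrite !mxE (negbTE ij) mulr0.
Qed.

Local Opaque Phi0 co hb Jform pairing ev.
Lemma co_hb_self (s : lat m) : s != 0 -> co (hb K s) s = 1.
Proof. by move=> sn0; rewrite co_hb eqxx sn0. Qed.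

Lemma Phi0_inj X Y : (forall z, Phi0 X z = Phi0 Y z) -> X = Y.
Proof.
case: X => x u; case: Y => y v /= E.
have Eco s t : co x (t - s) * w (t - s) s + pairing u s * co (hb K s) t =
    co y (t - s) * w (t - s) s + pairing v s * co (hb K s) t :=
  etrans (esym (co_Phi0p x u s t))
    (etrans (congr1 (fun z => co z t) (E (hb K s))) (co_Phi0p y v s t)).
have uv : u = v.
  apply/rowP => j; have := Eco (ev j) (ev j).
  rewrite (subrr (ev j)) !co_0 !mul0r !add0r co_hb_self ?ev_neq0 //.
  by rewrite !mulr1 !pairing_ev.
subst v; congr (_, _).
apply: co_ext => a.
have [->|an0] := eqVneq a 0; first by rewrite !co_0.
have [j Hj] := exists_ev an0.
have := Eco (ev j) (a + ev j).
rewrite (addrK (ev j) a) co_hb.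
have -> : (ev j == a + ev j) = false.
  apply/negbTE/eqP => Hs; move: an0.
  have -> : a = a + ev j - ev j by rewrite addrK.
  by rewrite -Hs subrr eqxx.
rewrite mulr0 !addr0; apply: mulIf; exact: w_neq0.
Qed.

End Main.

Section Core.
Variable K : fieldType.
Variable m : nat.
Hypothesis charK0 : [pchar K] =i pred0.
Local Notation w r s := ((Jform r s)%:~R : K).

Variable f : lat m -> lat m -> K.
Hypothesis f0t : forall t, f 0 t = 0.
Hypothesis fs0 : forall s, f s 0 = 0.
Hypothesis EqE : forall r s t,
  w r s * f (r + s) t = f r (t - s) * w (t - s) s + w r (t - r) * f s (t - r).

Lemma core_sol (a : lat m) : sol a (fun s => f s (s + a)).
Proof.
move=> r s; have := EqE r s (r + s + a).
have -> : r + s + a - s = r + a by rewrite addrAC addrK.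
have -> : r + s + a - r = s + a by rewrite -(addrA r s a) (addrC r (s + a)) addrK.
by [].
Qed.

Definition bet (a : lat m) : lat m :=
  if [pick j | Jform a (ev j) != 0] is Some j then ev j else 0.

Lemma bet_spec (a : lat m) : a != 0 -> Jform a (bet a) != 0 /\ exists j, bet a = ev j.
Proof.
move=> an0; rewrite /bet; case: pickP => [j Hj|H0]; first by split => //; exists j.
by have [j Hj] := exists_ev an0; move: (H0 j); rewrite Hj.
Qed.

Definition cc (a : lat m) : K := f (bet a) (bet a + a) / w a (bet a).

Lemma core_nz (a : lat m) : a != 0 -> forall s, f s (s + a) = cc a * w a s.
Proof.
move=> an0 s; have [Hb _] := bet_spec an0.
have := L1 charK0 an0 Hb (g := fun s => f s (s + a)).
rewrite /= f0t addNr fs0 => /(_ erefl erefl (core_sol a) s) E.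
rewrite /cc mulrAC -E mulfK //; exact: w_neq0.
Qed.

Definition uu : 'rV[K]_(m + m) := \row_j f (ev j) (ev j + 0).

Lemma core_0 s : f s (s + 0) = pairing uu s.
Proof.
have := L2 charK0 (g := fun s => f s (s + 0)).
rewrite /= f0t => /(_ erefl); apply.
move=> r t; have := core_sol 0 r t.
by rewrite !addr0.
Qed.

End Core.

Section Surj.
Variable K : fieldType.
Variable m : nat.
Hypothesis charK0 : [pchar K] =i pred0.
Local Notation H := (Hder K m).
Local Notation w r s := ((Jform r s)%:~R : K).

Lemma mcoeff_neq0_H (g : H) (k : nzlat m) : (g@_k != 0) = (k \in msupp g).
Proof. exact: mcoeff_neq0. Qed.

Lemma surj (D : H -> H) : is_derivation D -> exists X, forall z, Phi0 X z = D z.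
Proof.
case=> Dlin Dder.
pose f s t := co (D (hb K s)) t.
have f0t t : f 0 t = 0 by rewrite /f hb0 (lin0 Dlin) co_zero.
have fs0 s : f s 0 = 0 by exact: co_0.
have EqE r s t : w r s * f (r + s) t = f r (t - s) * w (t - s) s + w r (t - r) * f s (t - r).
  have H1 := Dder (hb K r) (hb K s).
  rewrite hbr_hb (linZ Dlin) in H1.
  have H2 : co (w r s *: D (hb K (r + s))) t =
      co (hbr (D (hb K r)) (hb K s) + hbr (hb K r) (D (hb K s))) t by rewrite H1.
  have E1 := coZ (w r s) (D (hb K (r + s))) t.
  have E2 := coD (hbr (D (hb K r)) (hb K s)) (hbr (hb K r) (D (hb K s))) t.
  have E3 := co_hbr_hb (D (hb K r)) s t.
  have E4 := co_hbr_hbl (D (hb K s)) r t.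
  exact: (etrans (esym E1) (etrans H2 (etrans E2 (congr2 +%R E3 E4)))).
have fE s t : f s t = co (D (hb K s)) t by [].
clearbody f.
pose S := undup (flatten [seq [seq val k - ev j | k <- msupp (D (hb K (ev j)))]
                         | j <- enum 'I_(m + m)]).
pose x := \sum_(a <- S) cc f a *: hb K a.
have cox t : t != 0 -> co x t = cc f t.
  move=> tn0; rewrite /x co_sum.
  rewrite (eq_bigr (fun a => (a == t)%:R * cc f a)); last first.
    by move=> a _; rewrite coZ co_hb tn0 andbT mulrC.
  rewrite sum_ind ?undup_uniq //; case: ifPn => // tS.
  apply/esym/eqP; apply: contraNT tS => ct.
  have [Hb [j bj]] := bet_spec tn0.
  have fne : f (bet t) (bet t + t) != 0.
    by move: ct; rewrite /cc mulf_eq0 negb_or => /andP [].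
  rewrite bj in fne.
  have et0 : ev j + t != 0 by apply: contraNneq fne => ->; rewrite fs0.
  pose k : nzlat m := exist _ (ev j + t) et0.
  have kin : k \in msupp (D (hb K (ev j))).
    rewrite -mcoeff_neq0_H -co_val -fE; exact: fne.
  rewrite mem_undup; apply/flatten_mapP; exists j; first by rewrite mem_enum.
  apply/mapP; exists k => //=.
  by rewrite (addrC (ev j) t) addrK.
clearbody x S.
exists (x, uu f) => z; move: z.
apply: lin_ext; [exact: Phi0_lin | exact: Dlin | ].
move=> k; have sn0 : val k != 0 := valP k.
move: (val k) sn0 => s sn0.
apply: co_ext => t.
rewrite co_Phi0p.
have [->|tn0] := eqVneq t 0.
  by rewrite !co_0 sub0r JformNl Jform_self oppr0 mulr0 mulr0 addr0.
have [ts|tsn] := eqVneq t s.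
  rewrite ts (subrr s) co_0 mul0r add0r co_hb_self // mulr1.
  have := core_0 charK0 f0t EqE s.
  by rewrite addr0 fE => ->.
have an0 : t - s != 0 by rewrite subr_eq0.
rewrite co_hb (eq_sym s t) (negbTE tsn) /= mulr0 addr0 (cox _ an0).
have := core_nz charK0 f0t fs0 EqE an0 s.
have -> : s + (t - s) = t by rewrite (addrC s (t - s)) subrK.
by rewrite fE => ->.
Qed.

End Surj.

Theorem theorem4p5 (K : closedFieldType) (m : nat)
  (charK0 : [pchar K]%R =i pred0) (m_gt0 : (0 < m)%N) :
  exists Phi : Ham K m -> (Hder K m -> Hder K m), Ham_iso_Der Phi.
Proof.
exists (@Phi0 K m); split.
- exact: Phi0_der.
- exact: Phi0_linX.
- exact: Phi0_br.
- exact: Phi0_inj.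
- move=> D HD; have [X HX] := surj charK0 HD; by exists X.
Qed.
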